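(* Let $\boldsymbol{A}$ be the adjacency matrix of an undirected graph without self-loops on a finite vertex set $\boldsymbol{V}=\{1,\dots,N\}$. Let $\mathcal{R}_e\subset\boldsymbol{V}$ be a nonempty set of egos and $\mathcal{R}_a\subset\boldsymbol{V}\setminus\mathcal{R}_e$ a nonempty set of alters, $n_a=|\mathcal{R}_a|$, each alter $j$ having a unique recruiting ego $e(j)\in\mathcal{R}_e$ with $A_{j\,e(j)}=1$. Let $\widetilde{\boldsymbol{A}}$ have $\widetilde A_{ij}=\widetilde A_{ji}=1$ iff $i\in\mathcal{R}_a$ and $j=e(i)$ (other entries $0$), and $\widetilde F_i=\mathbb{I}\{\sum_{j\neq i}Z_j\widetilde A_{ij}>0\}$. Let $\boldsymbol{Z}\in\{0,1\}^N$ have independent components with $\Pr(Z_i=1)=p_z\,\mathbb{I}\{i\in\mathcal{R}_e\}$, $p_z\in(0,1)$. For an alter $i$, let $S_i=\sum_{j\neq i}Z_jA_{ij}$ and define the three-level exposure $F_i=0$ if $S_i=0$, $F_i=1$ if $S_i=1$, $F_i=2+$ if $S_i\ge2$. Each alter $i$ has fixed real potential outcomes $Y_i(0,0),Y_i(0,1),Y_i(0,2+)$ and observed outcome $Y_i=Y_i(0,F_i)$. Assume there is a constant $\delta$ with $Y_i(0,2+)-Y_i(0,1)=\delta[Y_i(0,1)-Y_i(0,0)]$ for all $i\in\mathcal{R}_a$. Let $S_{i,-e(i)}=\sum_{j\in\mathcal{R}_e\setminus\{e(i)\}}Z_jA_{ij}$, $\pi^*_{i,0}=\Pr(S_{i,-e(i)}=0)$,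 $\pi^*_{i,1}=\Pr(S_{i,-e(i)}=1)$ (over $\boldsymbol{Z}$), and assume $\pi^*_{i,0}+\pi^*_{i,1}\delta\neq0$ for all $i\in\mathcal{R}_a$. Define $$IE=\frac1{n_a}\sum_{i\in\mathcal{R}_a}[Y_i(0,1)-Y_i(0,0)],\qquad \widehat{IE}=\frac1{n_a}\sum_{i\in\mathcal{R}_a}\Big[\frac{\mathbb{I}\{\widetilde F_i=1\}Y_i}{p_z}-\frac{\mathbb{I}\{\widetilde F_i=0\}Y_i}{1-p_z}\Big],$$ $$\widehat{IE}_{adj}=\frac1{n_a}\sum_{i\in\mathcal{R}_a}\frac{1}{\pi^*_{i,0}+\pi^*_{i,1}\delta}\Big[\frac{\mathbb{I}\{\widetilde F_i=1\}Y_i}{p_z}-\frac{\mathbb{I}\{\widetilde F_i=0\}Y_i}{1-p_z}\Big].$$ Then $\mathbb{E}_{\boldsymbol{Z}}[\widehat{IE}]=\frac1{n_a}\sum_{i\in\mathcal{R}_a}(\pi^*_{i,0}+\pi^*_{i,1}\delta)[Y_i(0,1)-Y_i(0,0)]$ and $\mathbb{E}_{\boldsymbol{Z}}[\widehat{IE}_{adj}]=IE$.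
   Context: Design-based setting: the network, the sample, the recruitment map and the potential outcomes are fixed; only $\boldsymbol{Z}$ is random and expectations/probabilities are over $\boldsymbol{Z}$. Alters are never treated, so their outcomes depend only on the three-level exposure. *)

(* Defs.v *)
(* Design-based setting: Z : {ffun 'I_N -> bool} is the only
   random object; expectations are finite sums over all 2^N assignments
   weighted by the product (independent Bernoulli) law. *)
From mathcomp Require Import all_boot all_order all_algebra.
Set Implicit Arguments. Unset Strict Implicit. Unset Printing Implicit Defensive.
Import Order.TTheory GRing.Theory Num.Theory.
Local Open Scope ring_scope.

Definition probZ {R : realFieldType} {N : nat} (Re : {set 'I_N}) (pz : R)
  (Z : {ffun 'I_N -> bool}) : R :=
  \prod_(i < N)
    (let q := if i \in Re then pz else 0 in if Z i then q else 1 - q).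

Definition EZ {R : realFieldType} {N : nat} (Re : {set 'I_N}) (pz : R)
  (f : {ffun 'I_N -> bool} -> R) : R :=
  \sum_(Z : {ffun 'I_N -> bool}) probZ Re pz Z * f Z.

Definition PrZ {R : realFieldType} {N : nat} (Re : {set 'I_N}) (pz : R)
  (P : {ffun 'I_N -> bool} -> bool) : R :=
  EZ Re pz (fun Z => if P Z then 1 else 0).

Definition Atilde {N : nat} (Ra : {set 'I_N}) (e : 'I_N -> 'I_N) (i j : 'I_N)
  : bool := ((i \in Ra) && (j == e i)) || ((j \in Ra) && (i == e j)).

Definition Ftilde {N : nat} (Ra : {set 'I_N}) (e : 'I_N -> 'I_N)
  (Z : {ffun 'I_N -> bool}) (i : 'I_N) : bool :=
  (0 < \sum_(j < N | j != i) (Z j && Atilde Ra e i j))%N.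

Definition Sexp {N : nat} (A : rel 'I_N) (Z : {ffun 'I_N -> bool}) (i : 'I_N)
  : nat := \sum_(j < N | j != i) (Z j && A i j).

Definition Yobs {R : realFieldType} {N : nat} (A : rel 'I_N)
  (Y00 Y01 Y02 : 'I_N -> R) (Z : {ffun 'I_N -> bool}) (i : 'I_N) : R :=
  let s := Sexp A Z i in
  if s == 0%N then Y00 i else if s == 1%N then Y01 i else Y02 i.

Definition Sminus {N : nat} (A : rel 'I_N) (Re : {set 'I_N})
  (e : 'I_N -> 'I_N) (Z : {ffun 'I_N -> bool}) (i : 'I_N) : nat :=
  \sum_(j in Re :\ e i) (Z j && A i j).

Definition pistar0 {R : realFieldType} {N : nat} (A : rel 'I_N)
  (Re : {set 'I_N}) (e : 'I_N -> 'I_N) (pz : R) (i : 'I_N) : R :=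
  PrZ Re pz (fun Z => Sminus A Re e Z i == 0%N).

Definition pistar1 {R : realFieldType} {N : nat} (A : rel 'I_N)
  (Re : {set 'I_N}) (e : 'I_N -> 'I_N) (pz : R) (i : 'I_N) : R :=
  PrZ Re pz (fun Z => Sminus A Re e Z i == 1%N).

Definition IE {R : realFieldType} {N : nat} (Ra : {set 'I_N})
  (Y00 Y01 : 'I_N -> R) : R :=
  (#|Ra|%:R)^-1 * \sum_(i in Ra) (Y01 i - Y00 i).

Definition HTterm {R : realFieldType} {N : nat} (A : rel 'I_N)
  (Ra : {set 'I_N}) (e : 'I_N -> 'I_N) (pz : R) (Y00 Y01 Y02 : 'I_N -> R)
  (Z : {ffun 'I_N -> bool}) (i : 'I_N) : R :=
  (if Ftilde Ra e Z i then 1 else 0) * Yobs A Y00 Y01 Y02 Z i / pz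
  - (if ~~ Ftilde Ra e Z i then 1 else 0) * Yobs A Y00 Y01 Y02 Z i / (1 - pz).

Definition IEhat {R : realFieldType} {N : nat} (A : rel 'I_N)
  (Ra : {set 'I_N}) (e : 'I_N -> 'I_N) (pz : R) (Y00 Y01 Y02 : 'I_N -> R)
  (Z : {ffun 'I_N -> bool}) : R :=
  (#|Ra|%:R)^-1 * \sum_(i in Ra) HTterm A Ra e pz Y00 Y01 Y02 Z i.

Definition IEhat_adj {R : realFieldType} {N : nat} (A : rel 'I_N)
  (Re Ra : {set 'I_N}) (e : 'I_N -> 'I_N) (pz delta : R)
  (Y00 Y01 Y02 : 'I_N -> R) (Z : {ffun 'I_N -> bool}) : R :=
  (#|Ra|%:R)^-1 * \sum_(i in Ra)
     (pistar0 A Re e pz i + pistar1 A Re e pz i * delta)^-1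
     * HTterm A Ra e pz Y00 Y01 Y02 Z i.

(* Main.v *)
Require Import Defs.
From mathcomp Require Import all_boot all_order all_algebra.
From mathcomp Require Import ring.
Import Order.TTheory GRing.Theory Num.Theory.
Local Open Scope ring_scope.

Set Implicit Arguments. Unset Strict Implicit.
Section Helpers.
Variables (R : realFieldType) (N : nat) (Re : {set 'I_N}) (pz : R).
Local Notation ffz := {ffun 'I_N -> bool}.

Lemma EZ_ext (f g : ffz -> R) :
  (forall Z, probZ Re pz Z != 0 -> f Z = g Z) -> EZ Re pz f = EZ Re pz g.
Proof.
move=> H; apply: eq_bigr => Z _.
have [->|nz] := eqVneq (probZ Re pz Z) 0; first by rewrite !mul0r.
by rewrite H.
Qed.

Lemma EZD (f g : ffz -> R) :
  EZ Re pz (fun Z => f Z + g Z) = EZ Re pz f + EZ Re pz g.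
Proof. by rewrite /EZ -big_split; apply: eq_bigr => Z _; rewrite mulrDr. Qed.

Lemma EZB (f g : ffz -> R) :
  EZ Re pz (fun Z => f Z - g Z) = EZ Re pz f - EZ Re pz g.
Proof. by rewrite /EZ -sumrB; apply: eq_bigr => Z _; rewrite mulrBr. Qed.

Lemma EZZ c (f : ffz -> R) :
  EZ Re pz (fun Z => c * f Z) = c * EZ Re pz f.
Proof. by rewrite /EZ mulr_sumr; apply: eq_bigr => Z _; rewrite mulrCA. Qed.

Lemma EZ_sum (I : finType) (S : {set I}) (F : I -> ffz -> R) :
  EZ Re pz (fun Z => \sum_(i in S) F i Z) = \sum_(i in S) EZ Re pz (F i).
Proof.
rewrite /EZ exchange_big; apply: eq_bigr => Z _; by rewrite mulr_sumr.
Qed.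

Lemma supp (Z : ffz) j : probZ Re pz Z != 0 -> j \notin Re -> Z j = false.
Proof.
move=> nz jn; apply/negP => Zj; move: nz.
by rewrite /probZ (bigD1 j) //= (negbTE jn) Zj mul0r eqxx.
Qed.

Definition flip k (Z : ffz) : ffz := [ffun j => if j == k then ~~ Z k else Z j].

Lemma flipK k : involutive (flip k).
Proof.
move=> Z; apply/ffunP => j; rewrite /flip !ffunE eqxx.
by case: (j =P k) => [->|//]; rewrite negbK.
Qed.

Lemma EZ_split k (h : ffz -> R) : k \in Re -> (forall Z, h (flip k Z) = h Z) ->
  EZ Re pz (fun Z => (if Z k then 1 else 0) * h Z) = pz * EZ Re pz h /\
  EZ Re pz (fun Z => (if ~~ Z k then 1 else 0) * h Z) = (1 - pz) * EZ Re pz h.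
Proof.
move=> kRe hinv.
pose fac (i : 'I_N) (Z : ffz) :=
  (let q := if i \in Re then pz else 0 in if Z i then q else 1 - q).
pose P Z := \prod_(i < N | i != k) fac i Z.
have probE Z : probZ Re pz Z = (if Z k then pz else 1 - pz) * P Z.
  by rewrite /probZ (bigD1 k) //= kRe.
have Pflip Z : P (flip k Z) = P Z.
  by apply: eq_bigr => i ik; rewrite /fac /flip ffunE (negbTE ik).
pose T := \sum_(Z : ffz) (if Z k then P Z * h Z else 0).
have T' : \sum_(Z : ffz) (if ~~ Z k then P Z * h Z else 0) = T.
  rewrite (reindex_inj (can_inj (flipK k))) /T; apply: eq_bigr => Z _.
  by rewrite Pflip hinv /flip ffunE eqxx negbK.
have E1 : EZ Re pz (fun Z => (if Z k then 1 else 0) * h Z) = pz * T.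
  rewrite /EZ /T mulr_sumr; apply: eq_bigr => Z _; rewrite probE.
  by case: (Z k); rewrite ?mul1r ?mul0r ?mulr0 ?mulrA.
have E2 : EZ Re pz (fun Z => (if ~~ Z k then 1 else 0) * h Z) = (1 - pz) * T.
  rewrite /EZ -T' mulr_sumr; apply: eq_bigr => Z _; rewrite probE.
  by case: (Z k); rewrite /= ?mul1r ?mul0r ?mulr0 ?mulrA.
have E : EZ Re pz h = T.
  have -> : EZ Re pz h = EZ Re pz (fun Z => (if Z k then 1 else 0) * h Z)
                        + EZ Re pz (fun Z => (if ~~ Z k then 1 else 0) * h Z).
    rewrite -EZD; apply: eq_bigr => Z _.
    by case: (Z k); rewrite /= ?mul1r ?mul0r ?addr0 ?add0r.
  rewrite E1 E2; ring.
by rewrite E1 E2 E.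
Qed.

End Helpers.

Theorem mainTheorem5 (R : realFieldType) (N : nat) (A : rel 'I_N)
  (Re Ra : {set 'I_N}) (e : 'I_N -> 'I_N) (pz delta : R)
  (Y00 Y01 Y02 : 'I_N -> R) :
  symmetric A ->
  irreflexive A ->
  Re != set0 ->
  Ra != set0 ->
  [disjoint Ra & Re] ->
  (forall j, j \in Ra -> e j \in Re /\ A j (e j)) ->
  0 < pz < 1 ->
  (forall i, i \in Ra -> Y02 i - Y01 i = delta * (Y01 i - Y00 i)) ->
  (forall i, i \in Ra -> pistar0 A Re e pz i + pistar1 A Re e pz i * delta != 0) ->
  EZ Re pz (IEhat A Ra e pz Y00 Y01 Y02)
    = (#|Ra|%:R)^-1 * \sum_(i in Ra)
        (pistar0 A Re e pz i + pistar1 A Re e pz i * delta) * (Y01 i - Y00 i)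
  /\ EZ Re pz (IEhat_adj A Re Ra e pz delta Y00 Y01 Y02) = IE Ra Y00 Y01.
Proof.
move=> Asym Airr Rne Rane dis He /andP[pz0 pz1] Hd Hw.
have pzn0 : pz != 0 by rewrite gt_eqF.
have pz1n0 : 1 - pz != 0 by rewrite subr_eq0 eq_sym lt_eqF.
have EHT : forall i, i \in Ra ->
    EZ Re pz (fun Z => HTterm A Ra e pz Y00 Y01 Y02 Z i)
    = (pistar0 A Re e pz i + pistar1 A Re e pz i * delta) * (Y01 i - Y00 i).
  move=> i iRa; set k := e i.
  have [kRe Aik] := He i iRa.
  have iRe : (i \in Re) = false by exact: disjointFr dis iRa.
  have ki : k != i by apply/eqP => ki; move: iRe; rewrite -ki kRe.
  have Ft Z : Ftilde Ra e Z i = Z k.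
    rewrite /Ftilde (bigD1 k) //= /Atilde iRa eqxx /= big1 ?addn0.
      by case: (Z k).
    move=> j /andP[_ jk]; rewrite (negbTE jk) /=.
    case jRa: (j \in Ra); last by rewrite andbF.
    have [eRe _] := He j jRa.
    case: (i =P e j) => [ie|_]; first by move: iRe; rewrite ie eRe.
    by rewrite /= andbF.
  pose Sm Z := Sminus A Re e Z i.
  have SE Z : probZ Re pz Z != 0 -> Sexp A Z i = (Z k + Sm Z)%N.
    move=> nz; rewrite /Sexp (bigD1 k) //= Aik andbT; congr addn.
    rewrite /Sm /Sminus big_mkcond [RHS]big_mkcond /=; apply: eq_bigr => j _.
    rewrite in_setD1; case jRe: (j \in Re).
      have ji : j != i by apply/eqP => ji; move: iRe; rewrite -ji jRe.
      by rewrite ji andbT.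
    by rewrite (supp nz (negbT jRe)) andbF /=; case: ifP.
  pose f (s : nat) := if s == 0%N then Y01 i else Y02 i.
  pose g (s : nat) := if s == 0%N then Y00 i else if s == 1%N then Y01 i else Y02 i.
  have YE Z : probZ Re pz Z != 0 ->
      Yobs A Y00 Y01 Y02 Z i = if Z k then f (Sm Z) else g (Sm Z).
    move=> nz; rewrite /Yobs SE //.
    by case: (Z k) => //=; rewrite /f; case: (Sm Z).
  have Sflip Z : Sm (flip k Z) = Sm Z.
    apply: eq_bigr => j; rewrite in_setD1 => /andP[jk _].
    by rewrite /flip ffunE (negbTE jk).
  rewrite (EZ_ext (g := fun Z => (if Z k then 1 else 0) * (pz^-1 * f (Sm Z))
                 - (if ~~ Z k then 1 else 0) * ((1 - pz)^-1 * g (Sm Z)))); last first.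
    move=> Z nz; rewrite /HTterm Ft YE //.
    by case: (Z k); rewrite /= ?mul1r ?mul0r ?subr0 ?sub0r mulrC.
  rewrite EZB.
  have [-> _] := EZ_split pz (h := fun Z => pz^-1 * f (Sm Z)) kRe (fun Z => ltac:(by rewrite /= Sflip)).
  have [_ ->] := EZ_split pz (h := fun Z => (1 - pz)^-1 * g (Sm Z)) kRe (fun Z => ltac:(by rewrite /= Sflip)).
  rewrite !EZZ !mulrA mulfV // mulfV // !mul1r -EZB.
  rewrite (EZ_ext (g := fun Z => (Y01 i - Y00 i) * (if Sm Z == 0%N then 1 else 0)
                      + (delta * (Y01 i - Y00 i)) * (if Sm Z == 1%N then 1 else 0))); last first.
    move=> Z _; rewrite /f /g; case: (Sm Z) => [|[|s]] /=.
    - by rewrite mulr1 mulr0 addr0.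
    - by rewrite mulr1 mulr0 add0r Hd.
    - by rewrite !mulr0 addr0 subrr.
  rewrite EZD !EZZ /pistar0 /pistar1 /PrZ; ring.
split.
  rewrite /IEhat EZZ EZ_sum; congr (_ * _); apply: eq_bigr => i iRa; exact: EHT.
rewrite /IEhat_adj EZZ EZ_sum /IE; congr (_ * _); apply: eq_bigr => i iRa.
by rewrite EZZ EHT // mulrA mulVf ?mul1r //; exact: Hw.
Qed.
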